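(* There is a constant $C$, depending only on $h$ and $b_1,\dots,b_h$, with the following property. Let $A\subseteq\mathbb{Z}_{\ge0}$, $0<\delta<1$, $2\le\ell\le h$ and $n\ge0$. Let $\mathrm{R}$ be any one of $r,\ r^*,\ \rho,\ \rho^{(\delta\text{-small})}$. Then \[ \mathrm{R}_{A,\ell}(n)\le C\,\widehat{\mathrm{R}}_{A,\ell}(n)\prod_{j=2}^{\ell-1}\Big(\max_{0\le k\le n}\widehat{r}^{\,*}_{A,j}(k)\Big), \] where the empty product (for $\ell=2$) equals $1$.
   Context: Fix an integer $h\ge 2$ and positive integers $b_1,\dots,b_h$, not necessarily distinct, with $\gcd(b_1,\dots,b_h)=1$. Let $A\subseteq\mathbb{Z}_{\ge0}$, $1\le\ell\le h$ and $n\ge0$ be an integer. Representation functions: - $r_{A,\ell}(n)$ counts the tuples $(k_1,\dots,k_\ell)\in A^\ell$ with $b_1k_1+\cdots+b_\ell k_\ell=n$. - $\rho_{A,\ell}(n)$ counts those tuples in which the $k_i$ are pairwise distinct (''exact'' solutions). - For $0<\delta<1$, $\rho^{(\delta\text{-small})}_{A,\ell}(n)$ counts exact solutions with $k_j<n^\delta$ for some $j$. - $r^*_{A,\ell}(n)$ is the maximum, over index choices $1\le i_1<\cdots<i_\ell\le h$, of the number of $(k_1,\dots,k_\ell)\in A^\ell$ with $b_{i_1}k_1+\cdots+b_{i_\ell}k_\ell=n$. Disjoint families: the support of a solution tuple is the set $\{k_1,\dots,k_\ell\}$. A family of solutions is disjoint if their supports are pairwise disjoint. For each of the counting functions $\mathrm{R}$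 above, $\widehat{\mathrm{R}}_{A,\ell}(n)$ denotes the maximum cardinality of a disjoint family of solutions among those counted by $\mathrm{R}_{A,\ell}(n)$. For the starred function, $\widehat{r}^{\,*}_{A,\ell}(n)$ is the maximum over index choices $i_1<\cdots<i_\ell$ of the maximum cardinality of a disjoint family of solutions in $A^\ell$ of $b_{i_1}k_1+\cdots+b_{i_\ell}k_\ell=n$. *)

(* Defs.v *)
From mathcomp Require Import all_boot all_order all_algebra.
From mathcomp Require Import reals exp.
Set Implicit Arguments. Unset Strict Implicit. Unset Printing Implicit Defensive.
Import Order.TTheory GRing.Theory Num.Theory.

(* Indexing convention: b_1,...,b_h of the paper are b 0, ..., b (h-1).
   A solution tuple (k_1,...,k_l) is a finite function 'I_l -> 'I_n.+1
   (every k_i in a solution of c_1 k_1 + ... + c_l k_l = n with all c_i >= 1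
   satisfies k_i <= n, so nothing is lost). *)

Definition tup (l n : nat) := {ffun 'I_l -> 'I_n.+1}.

Definition sols (A : pred nat) (l : nat) (c : 'I_l -> nat) (n : nat) : {set tup l n} :=
  [set k : tup l n | [forall i, A (k i)] && ((\sum_(i < l) c i * k i)%N == n)].

Definition exact_sols (A : pred nat) (l : nat) (c : 'I_l -> nat) (n : nat) : {set tup l n} :=
  [set k in sols A c n | injectiveb k].

Definition small_sols (R : realType) (delta : R) (A : pred nat) (l : nat)
    (c : 'I_l -> nat) (n : nat) : {set tup l n} :=
  [set k in exact_sols A c n | [exists j, ((k j)%:R < powR (n%:R) delta)%R]].

Definition supp (l n : nat) (k : tup l n) : {set 'I_n.+1} := [set k i | i in 'I_l].

Definition disjoint_fam (l n : nat) (F : {set tup l n}) : bool :=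
  [forall k1 in F, forall k2 in F, (k1 != k2) ==> [disjoint supp k1 & supp k2]].

Definition hat (l n : nat) (S : {set tup l n}) : nat :=
  \max_(F : {set tup l n} | (F \subset S) && disjoint_fam F) #|F|.

Definition incr_choice (l h : nat) (s : {ffun 'I_l -> 'I_h}) : bool :=
  [forall i : 'I_l, forall j : 'I_l, (i < j)%N ==> (s i < s j)%N].

Definition r_fun (b : nat -> nat) (A : pred nat) (l n : nat) : nat :=
  #|sols A (fun i : 'I_l => b i) n|.
Definition r_hat (b : nat -> nat) (A : pred nat) (l n : nat) : nat :=
  hat (sols A (fun i : 'I_l => b i) n).

Definition rho_fun (b : nat -> nat) (A : pred nat) (l n : nat) : nat :=
  #|exact_sols A (fun i : 'I_l => b i) n|.
Definition rho_hat (b : nat -> nat) (A : pred nat) (l n : nat) : nat :=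
  hat (exact_sols A (fun i : 'I_l => b i) n).

Definition rho_small (R : realType) (delta : R) (b : nat -> nat) (A : pred nat)
    (l n : nat) : nat :=
  #|small_sols delta A (fun i : 'I_l => b i) n|.
Definition rho_small_hat (R : realType) (delta : R) (b : nat -> nat) (A : pred nat)
    (l n : nat) : nat :=
  hat (small_sols delta A (fun i : 'I_l => b i) n).

Definition rstar (h : nat) (b : nat -> nat) (A : pred nat) (l n : nat) : nat :=
  \max_(s : {ffun 'I_l -> 'I_h} | incr_choice s) #|sols A (fun i => b (s i)) n|.
Definition rstar_hat (h : nat) (b : nat -> nat) (A : pred nat) (l n : nat) : nat :=
  \max_(s : {ffun 'I_l -> 'I_h} | incr_choice s) hat (sols A (fun i => b (s i)) n).

Definition prod_factor (h : nat) (b : nat -> nat) (A : pred nat) (l n : nat) : nat :=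
  \prod_(2 <= j < l) \max_(k < n.+1) rstar_hat h b A j k.

(* Main.v *)
Require Import Defs.
From mathcomp Require Import all_boot all_order all_algebra.
From mathcomp Require Import reals exp zify.
Set Implicit Arguments. Unset Strict Implicit. Unset Printing Implicit Defensive.

Lemma card_bigcup_le (I T : finType) (P : pred I) (A : I -> {set T}) :
  #|\bigcup_(i | P i) A i| <= \sum_(i | P i) #|A i|.
Proof.
apply: (big_ind2 (fun (X : {set T}) n => #|X| <= n)).
- by rewrite cards0.
- move=> X1 n1 X2 n2 h1 h2; apply: leq_trans (leq_card_setU X1 X2).1 _.
  exact: leq_add.
- by [].
Qed.

Lemma hat_witness l n (S : {set tup l n}) :
  {F : {set tup l n} | (F \subset S) && disjoint_fam F & hat S = #|F|}.
Proof.
rewrite /hat.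
have := @eq_bigmax_cond _ (fun F : {set tup l n} => (F \subset S) && disjoint_fam F) (fun F => #|F|).
case.
- apply/card_gt0P; exists set0; rewrite unfold_in /= sub0set /=.
  by apply/forall_inP => k1; rewrite inE.
- move=> F HF ->; exists F => //.
Qed.

Lemma count_step l' n (S : {set tup l'.+1 n}) (B : nat)
  (HB : forall (i : 'I_l'.+1) (x : 'I_n.+1), #|[set t in S | t i == x]| <= B) :
  #|S| <= l'.+1 * hat S * (l'.+1 * B).
Proof.
have [F /andP[FS Fd] eqF] := hat_witness S.
set U := \bigcup_(f in F) supp f.
have HU : #|U| <= l'.+1 * hat S.
  apply: leq_trans (card_bigcup_le _ _) _.
  rewrite eqF mulnC -sum_nat_const; apply: leq_sum => f _.
  by rewrite /supp; apply: leq_trans (leq_imset_card _ _) _; rewrite card_ord.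
have suppU : forall f, f \in F -> supp f \subset U.
  by move=> f fF; apply/subsetP => y yf; apply/bigcupP; exists f.
have cover : S \subset \bigcup_(x in U) \bigcup_(i < l'.+1) [set t in S | t i == x].
  apply/subsetP => t tS.
  case: (boolP (supp t :&: U == set0)) => [|/set0Pn [y]].
    rewrite setI_eq0 => dis.
    have t0 : t ord0 \in supp t by apply/imsetP; exists ord0.
    have tF : t \notin F.
      apply/negP => tF.
      by move: (disjointFr dis t0); rewrite (subsetP (suppU t tF)).
    have : hat S >= #|t |: F|.
      rewrite /hat; apply: (leq_bigmax_cond (t |: F)); rewrite subUset sub1set tS FS /=.
      apply/forall_inP => k1 /setU1P [->|k1F]; apply/forall_inP => k2 /setU1P [->|k2F]; apply/implyP => ne.
      - by rewrite eqxx in ne.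
      - exact: disjointWr (suppU k2 k2F) dis.
      - by rewrite disjoint_sym; exact: disjointWr (suppU k1 k1F) dis.
      - by move/forall_inP: Fd => /(_ k1 k1F) /forall_inP /(_ k2 k2F) /implyP; apply.
    by rewrite cardsU1 tF eqF ltnn.
  rewrite inE => /andP [/imsetP [i _ ->] yU].
  apply/bigcupP; exists (t i) => //; apply/bigcupP; exists i => //.
  by rewrite inE tS eqxx.
apply: leq_trans (subset_leq_card cover) _.
apply: leq_trans (card_bigcup_le _ _) _.
apply: leq_trans (_ : \sum_(x in U) (l'.+1 * B) <= _).
  apply: leq_sum => x _; apply: leq_trans (card_bigcup_le _ _) _.
  apply: leq_trans (_ : \sum_(i < l'.+1) B <= _).
    by apply: leq_sum => i _; exact: HB.
  by rewrite sum_nat_const card_ord.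
rewrite sum_nat_const; exact: leq_mul.
Qed.

Lemma fix_coord l' n (A : pred nat) (c : 'I_l'.+1 -> nat) (cpos : forall i, 0 < c i)
  (i : 'I_l'.+1) (x : 'I_n.+1) :
  #|[set t in sols A c n | t i == x]| <=
  #|sols A (fun j : 'I_l' => c (lift i j)) (n - c i * x)|.
Proof.
set m := n - c i * x.
set X := [set t in sols A c n | t i == x].
have key : forall t, t \in X ->
   \sum_(j < l') c (lift i j) * t (lift i j) = m /\ forall j, t (lift i j) <= m.
  move=> t; rewrite !inE => /andP [/andP [_ /eqP Hs] /eqP ti].
  have E : \sum_(k < l'.+1) c k * t k = c i * t i + \sum_(j < l') c (lift i j) * t (lift i j).
    by rewrite (bigD1_ord i (P := predT)).
  have Es : \sum_(j < l') c (lift i j) * t (lift i j) = m.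
    rewrite /m -ti; move: Hs; rewrite E.
    move: (\sum_(j < l') c (lift i j) * t (lift i j)) (c i * t i) => a b0 H; lia.
  split => // j; rewrite -Es (bigD1 j) //=.
  apply: leq_trans (leq_addr _ _); exact: leq_pmull.
pose f := fun t : tup l'.+1 n => [ffun j : 'I_l' => (inord (t (lift i j)) : 'I_m.+1)].
have fval : forall t, t \in X -> forall j, (f t j : nat) = t (lift i j).
  by move=> t tX j; rewrite /f ffunE inordK // ltnS; case: (key t tX) => _ ->.
rewrite -(card_in_imset (f := f)).
  apply: subset_leq_card; apply/subsetP => _ /imsetP [t tX ->].
  rewrite inE; apply/andP; split.
    apply/forallP => j; rewrite fval //.
    by move: tX; rewrite !inE => /andP [/andP [/forallP H _] _].
  apply/eqP; apply: etrans (proj1 (key t tX)).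
  apply: eq_bigr => j _; by rewrite fval.
move=> t1 t2 t1X t2X Hf; apply/ffunP => k.
case: (unliftP i k) => [j ->|->].
  apply/val_inj => /=; rewrite -(fval t1 t1X) -(fval t2 t2X); by rewrite Hf.
by move: t1X t2X; rewrite !inE => /andP [_ /eqP ->] /andP [_ /eqP ->].
Qed.

Lemma sols_ext (A : pred nat) l (c1 c2 : 'I_l -> nat) n :
  c1 =1 c2 -> sols A c1 n = sols A c2 n.
Proof.
move=> E; apply/setP => t; rewrite !inE; congr (_ && (_ == _)).
by apply: eq_bigr => i _; rewrite E.
Qed.

Lemma max_mono (f : nat -> nat) m n : m <= n ->
  \max_(k < m.+1) f k <= \max_(k < n.+1) f k.
Proof.
move=> mn; apply/bigmax_leqP => k _.
have kn : k < n.+1 by apply: leq_trans (ltn_ord k) _.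
exact: (@leq_bigmax _ (fun k : 'I_n.+1 => f k) (Ordinal kn)).
Qed.

Lemma pf_mono h b A l m n : m <= n -> prod_factor h b A l m <= prod_factor h b A l n.
Proof.
move=> mn; apply: leq_prod => j _; exact: max_mono.
Qed.

Lemma hat_rstar h (b : nat -> nat) A l (s : {ffun 'I_l -> 'I_h}) n : incr_choice s ->
  hat (sols A (fun i => b (s i)) n) <= \max_(k < n.+1) rstar_hat h b A l k.
Proof.
move=> inc; apply: leq_trans (@leq_bigmax _ (fun k : 'I_n.+1 => rstar_hat h b A l k) ord_max).
by rewrite /rstar_hat; apply: (leq_bigmax_cond s).
Qed.

Lemma incr_lift h l' (s : {ffun 'I_l'.+1 -> 'I_h}) (i : 'I_l'.+1) :
  incr_choice s -> incr_choice [ffun j : 'I_l' => s (lift i j)].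
Proof.
move=> /forallP H; apply/forallP => j1; apply/forallP => j2; apply/implyP => lt.
rewrite !ffunE; move/forallP: (H (lift i j1)) => /(_ (lift i j2)) /implyP; apply.
by rewrite /= ltnNge leq_bump2 -ltnNge.
Qed.

Section Main.
Variables (h : nat) (b : nat -> nat) (Hh : 2 <= h) (Hb : forall i, i < h -> 0 < b i)
  (A : pred nat).

Definition Qp l := forall n (s : {ffun 'I_l -> 'I_h}), incr_choice s ->
  #|sols A (fun i => b (s i)) n| <= (h * h) ^ l * prod_factor h b A l.+1 n.

Lemma Gstep l' : l'.+1 <= h -> Qp l' -> forall n (s : {ffun 'I_l'.+1 -> 'I_h})
  (c : 'I_l'.+1 -> nat) (S : {set tup l'.+1 n}), incr_choice s -> c =1 (fun i => b (s i)) ->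
  S \subset sols A c n ->
  #|S| <= (h * h) ^ l'.+1 * hat S * prod_factor h b A l'.+1 n.
Proof.
move=> lh Q n s c S inc cE Ssub.
have cpos : forall i, 0 < c i by move=> i; rewrite cE; apply: Hb.
set B := (h * h) ^ l' * prod_factor h b A l'.+1 n.
have HB : forall (i : 'I_l'.+1) (x : 'I_n.+1), #|[set t in S | t i == x]| <= B.
  move=> i x.
  apply: leq_trans (_ : #|[set t in sols A c n | t i == x]| <= _).
    apply: subset_leq_card; apply/subsetP => t; rewrite inE => /andP [tS tx].
    by rewrite inE (subsetP Ssub t tS).
  apply: leq_trans (fix_coord A cpos i x) _.
  rewrite (sols_ext A (c2 := fun j => b ([ffun j : 'I_l' => s (lift i j)] j))); last first.
    by move=> j; rewrite ffunE cE.
  apply: leq_trans (Q _ _ (incr_lift i inc)) _.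
  rewrite /B leq_mul2l; apply/orP; right; apply: pf_mono; exact: leq_subr.
apply: leq_trans (count_step HB) _.
rewrite /B expnS.
move: (hat S) (prod_factor h b A l'.+1 n) ((h * h) ^ l') => a p k.
have hh : l'.+1 * l'.+1 <= h * h by apply: leq_mul.
nia.
Qed.

Lemma Qall l : l <= h -> Qp l.
Proof.
elim: l => [_|l' IH lh] n s inc.
  rewrite /prod_factor big_geq // muln1 expn0.
  by apply: leq_trans (max_card _) _; rewrite card_ffun !card_ord.
case: l' IH lh s inc => [|l'] IH lh s inc.
  rewrite /prod_factor big_geq // muln1 expn1.
  apply: leq_trans (_ : 1 <= _); last by apply: leq_trans (_ : 2 * 2 <= _) => //; exact: leq_mul.
  apply/card_le1_eqP => t1 t2; rewrite !inE !big_ord1 => /andP [_ /eqP e1] /andP [_ /eqP e2].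
  apply/ffunP => i; rewrite (ord1 i); apply/val_inj => /=.
  by apply/eqP; rewrite -(eqn_pmul2l (Hb (ltn_ord (s ord0)))) e1 e2.
have Q := IH (ltnW lh).
have := Gstep lh Q (c := fun i => b (s i)) (S := sols A (fun i => b (s i)) n) inc (fun _ => erefl) (subxx _).
move=> H; apply: leq_trans H _.
rewrite /prod_factor (big_nat_recr _ _ _ (_ : 2 <= l'.+2)) //= -mulnA leq_mul2l; apply/orP; right.
rewrite mulnC leq_mul2l; apply/orP; right; exact: hat_rstar.
Qed.

End Main.

Theorem mainTheorem9 (h : nat) (b : nat -> nat)
  (Hh : (2 <= h)%N)
  (Hb : forall i, (i < h)%N -> (0 < b i)%N)
  (Hgcd : \big[gcdn/0%N]_(i < h) b i = 1%N) :
  exists C : nat,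
    forall (R : realType) (delta : R) (A : pred nat) (l n : nat),
      (0 < delta)%R -> (delta < 1)%R -> (2 <= l)%N -> (l <= h)%N ->
      [/\ (r_fun b A l n <= C * r_hat b A l n * prod_factor h b A l n)%N,
          (rstar h b A l n <= C * rstar_hat h b A l n * prod_factor h b A l n)%N,
          (rho_fun b A l n <= C * rho_hat b A l n * prod_factor h b A l n)%N
        & (rho_small delta b A l n <= C * rho_small_hat delta b A l n * prod_factor h b A l n)%N].
Proof.
exists ((h * h) ^ h) => R delta A [|l'] n _ _ l2 lh //.
have Q := Qall Hh Hb A (ltnW lh).
have G := @Gstep h b Hh Hb A l' lh Q n.
have Cle : forall a p, (h * h) ^ l'.+1 * a * p <= (h * h) ^ h * a * p.
  move=> a p; rewrite -!mulnA leq_mul2r; apply/orP; right.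
  have hp : 0 < h * h by rewrite muln_gt0; apply/andP; split; apply: leq_trans Hh.
  exact: (leq_pexp2l hp lh).
set s0 := [ffun i : 'I_l'.+1 => widen_ord lh i].
have inc0 : incr_choice s0.
  by apply/forallP => i; apply/forallP => j; apply/implyP; rewrite !ffunE.
have cE : (fun i : 'I_l'.+1 => b i) =1 (fun i => b (s0 i)) by move=> i; rewrite ffunE.
have exS : exact_sols A (fun i : 'I_l'.+1 => b i) n \subset sols A (fun i : 'I_l'.+1 => b i) n.
  by apply/subsetP => t; rewrite inE => /andP [].
split.
- apply: leq_trans (Cle _ _); exact: G inc0 cE (subxx _).
- apply/bigmax_leqP => s inc.
  apply: leq_trans (G s _ _ inc (fun _ => erefl) (subxx _)) _.
  apply: leq_trans (Cle _ _) _.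
  rewrite -!mulnA leq_mul2l; apply/orP; right; rewrite leq_mul2r; apply/orP; right.
  by rewrite /rstar_hat; apply: (leq_bigmax_cond s).
- apply: leq_trans (Cle _ _); exact: G inc0 cE exS.
- apply: leq_trans (Cle _ _); apply: G inc0 cE _.
  by apply: subset_trans exS; apply/subsetP => t; rewrite inE => /andP [].
Qed.
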